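(* Let $m\ge 2$ and $h\ge 1$ be integers and $n'=2^{3m+h-1}-2^{2m}-2^m$. Let $\mathbf{C}_0$ be a projective binary linear $[2^{2m}-1,3m]$ code whose set of nonzero weights is $\{2^{2m-1}-2^{m-1},\,2^{2m-1},\,2^{2m-1}+2^{m-1}\}$, and let $\mathbf{C}_1$ be its simplex complementary code of dimension $3m+h$, a $[2^{3m+h}-2^{2m},\ 3m+h,\ 2^{3m+h-1}-2^{2m-1}-2^{m-1}]_2$ code with maximum weight $2^{3m+h-1}$. Then the code $\mathbf{C}'$ obtained from $\mathbf{C}_1$ by the extension construction is a minimal binary linear code with parameters $[2^{3m+h}-2^{2m}+n',\ 3m+h,\ 2^{3m+h-1}-2^{2m-1}-2^{m-1}]_2$ and maximum weight $2^{3m+h}-2^{2m}-2^m$, and it violates the Ashikhmin–Barg condition.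
   Context: Projective code: columns of a generator matrix are nonzero and pairwise distinct (binary case). Simplex complementary code of a projective binary $[n,k]$ code of dimension $K=k+h$: append $h$ zeros to the columns of a generator matrix, and take the code generated by the matrix whose columns are all nonzero vectors of $\mathbf{F}_2^K$ other than these $n$ vectors. Extension construction for a binary linear $[N,K]$ code $\mathbf{D}$ with $K\ge2$, minimum nonzero weight $w_{min}$, maximum weight $w_{max}$ and $n'=2w_{min}-w_{max}\ge1$: choose a basis $\mathbf{r}_1,\dots,\mathbf{r}_K$ with $wt(\mathbf{r}_1)=w_{max}$, $wt(\mathbf{r}_2)=w_{min}$; the extended code is generated by $(\mathbf{1},\mathbf{r}_1),(\mathbf{0},\mathbf{r}_2),\dots,(\mathbf{0},\mathbf{r}_K)$ in $\mathbf{F}_2^{n'+N}$. Minimal code: any two nonzero codewords with nested supports are equal. Ashikhmin–Barg condition (binary): $w_{min}/w_{max}>1/2$. *)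

(* Defs.v *)
From mathcomp Require Import all_boot all_order all_algebra.
Set Implicit Arguments. Unset Strict Implicit. Unset Printing Implicit Defensive.
Import GRing.Theory Num.Theory.
Local Open Scope ring_scope.

Definition code (k n : nat) (G : 'M['F_2]_(k, n)) : {set 'rV['F_2]_n} :=
  [set u *m G | u : 'rV['F_2]_k].

Definition supp (n : nat) (x : 'rV['F_2]_n) : {set 'I_n} := [set i | x 0 i != 0].
Definition wt (n : nat) (x : 'rV['F_2]_n) : nat := #|supp x|.

Definition minwt (n : nat) (C : {set 'rV['F_2]_n}) : nat :=
  \big[minn/n]_(c in C | c != 0) wt c.
Definition maxwt (n : nat) (C : {set 'rV['F_2]_n}) : nat :=
  \max_(c in C | c != 0) wt c.

Definition is_nz_weight (n : nat) (C : {set 'rV['F_2]_n}) (w : nat) : Prop :=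
  exists2 c, c \in C & (c != 0) /\ wt c = w.

Definition projective (k n : nat) (G : 'M['F_2]_(k, n)) : Prop :=
  (forall j, col j G != 0) /\ injective (fun j => col j G).

(* G1 generates the simplex complementary code of G (of dimension k + h):
   its columns are exactly (each once) the nonzero vectors of F_2^(k+h)
   other than the columns of G padded with h zeros. *)
Definition simplex_complement (k n h N : nat) (G : 'M['F_2]_(k, n))
    (G1 : 'M['F_2]_(k + h, N)) : Prop :=
  injective (fun j => col j G1) /\
  forall v : 'cV['F_2]_(k + h),
    (exists j, col j G1 = v) <-> (v != 0 /\ forall j, v != col j (col_mx G (0 : 'M_(h, n)))).

(* Extension construction: given generator rows r_i (a basis of D), with the
   row i1 playing the role of r_1, the new generator has rows (1, r_i1) and
   (0, r_i) for i != i1, in F_2^(n' + N) with n' = 2 w_min - w_max. *)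
Definition ext_len (K N : nat) (R : 'M['F_2]_(K, N)) : nat :=
  (2 * minwt (code R) - maxwt (code R))%N.

Definition ext_gen (K N : nat) (i1 : 'I_K) (R : 'M['F_2]_(K, N)) :
    'M['F_2]_(K, ext_len R + N) :=
  row_mx (\matrix_(i < K, j < ext_len R) (i == i1)%:R) R.

Definition minimal_code (n : nat) (C : {set 'rV['F_2]_n}) : Prop :=
  forall c c', c \in C -> c' \in C -> c != 0 -> c' != 0 ->
    supp c \subset supp c' -> c = c'.

Definition AB_condition (n : nat) (C : {set 'rV['F_2]_n}) : Prop :=
  (1 / 2 : rat) < (minwt C)%:R / (maxwt C)%:R.

(* Main.v *)
Require Import Defs.
From mathcomp Require Import all_boot all_order all_algebra.
From mathcomp Require Import zify ring lra.
Set Implicit Arguments. Unset Strict Implicit. Unset Printing Implicit Defensive.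
Import GRing.Theory Num.Theory.
Local Open Scope ring_scope.

Lemma F2c (x : 'F_2) : x = 0 \/ x = 1.
Proof.
case: x => [[|[|k]] Hk].
- by left; apply: val_inj.
- by right; apply: val_inj.
- by move: Hk; rewrite (pdiv_id (isT : prime 2)).
Qed.

Lemma F2nz (x : 'F_2) : x != 0 -> x = 1.
Proof. by case: (F2c x) => ->; rewrite ?eqxx. Qed.

Lemma wt_sum n (x : 'rV['F_2]_n) : wt x = (\sum_i ((x 0 i != 0)%R : nat))%N.
Proof.
rewrite /wt /supp -sum1_card big_mkcond /=.
by apply: eq_bigr => i _; rewrite inE; case: (x 0 i != 0).
Qed.

Lemma wt0 n : wt (0 : 'rV['F_2]_n) = 0%N.
Proof. by rewrite wt_sum big1 // => i _; rewrite mxE eqxx. Qed.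

Lemma wt_le n (x : 'rV['F_2]_n) : (wt x <= n)%N.
Proof. by rewrite /wt (leq_trans (max_card _)) ?card_ord. Qed.

Lemma wt_eq0 n (x : 'rV['F_2]_n) : wt x = 0%N -> x = 0.
Proof.
move/cards0_eq => H; apply/matrixP => i j; rewrite ord1 mxE.
apply/eqP; apply: contraT => nz.
have : j \in supp x by rewrite inE.
by rewrite H inE.
Qed.

Lemma wt_rowmx n1 n2 (a : 'rV['F_2]_n1) (b : 'rV['F_2]_n2) :
  wt (row_mx a b) = (wt a + wt b)%N.
Proof.
rewrite !wt_sum big_split_ord /=; congr (_ + _)%N; apply: eq_bigr => i _;
by rewrite ?row_mxEl ?row_mxEr.
Qed.

Lemma wt_const n (c : 'F_2) : wt (const_mx c : 'rV_n) = ((c != 0)%R * n)%N.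
Proof.
rewrite wt_sum (eq_bigr (fun _ => (c != 0 : nat))) => [|i _]; last by rewrite mxE.
by rewrite big_const_ord iter_addn_0 mulnC.
Qed.

Lemma wt_split n (c c' : 'rV['F_2]_n) :
  supp c \subset supp c' -> wt c' = (wt c + wt (c' - c))%N.
Proof.
move/subsetP => H; rewrite !wt_sum -big_split /=; apply: eq_bigr => i _.
have := H i; rewrite !inE !mxE.
case: (F2c (c 0 i)) => ->; case: (F2c (c' 0 i)) => ->;
  rewrite ?subr0 ?subrr ?eqxx ?oner_eq0 //.
by move/(_ isT).
Qed.

Lemma bigmin_le (I : finType) (P : pred I) (F : I -> nat) x0 c :
  P c -> (\big[minn/x0]_(i | P i) F i <= F c)%N.
Proof.
move=> Pc; have : c \in index_enum I by rewrite mem_index_enum.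
elim: (index_enum I) => [//|a r IH]; rewrite inE big_cons => /orP[/eqP<-|/IH].
  by rewrite Pc geq_minl.
by case: (P a) => // H; rewrite (leq_trans (geq_minr _ _) H).
Qed.

Lemma minwt_eq n (C : {set 'rV['F_2]_n}) w :
  (exists2 c, c \in C & (c != 0) /\ wt c = w) ->
  (forall c, c \in C -> c != 0 -> (w <= wt c)%N) -> minwt C = w.
Proof.
case=> c cC [cnz cw] H; apply/eqP; rewrite eqn_leq; apply/andP; split.
- by rewrite -cw /minwt (bigmin_le (fun c => wt c)) // cC.
- rewrite /minwt; apply: (big_ind (fun x => w <= x)%N).
  + by rewrite -cw wt_le.
  + by move=> x y; rewrite leq_min => -> ->.
  + by move=> d /andP[dC dnz]; apply: H.
Qed.

Lemma maxwt_eq n (C : {set 'rV['F_2]_n}) w :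
  (exists2 c, c \in C & (c != 0) /\ wt c = w) ->
  (forall c, c \in C -> c != 0 -> (wt c <= w)%N) -> maxwt C = w.
Proof.
case=> c cC [cnz cw] H; apply/eqP; rewrite eqn_leq; apply/andP; split.
- by apply/bigmax_leqP => d /andP[]; apply: H.
- by rewrite -cw /maxwt (leq_bigmax_cond (F := fun c => wt c)) // cC.
Qed.

Lemma half_card K (u : 'rV['F_2]_K) : u != 0 ->
  #|[set v : 'cV['F_2]_K | (u *m v) 0 0 != 0]| = (2 ^ K.-1)%N.
Proof.
move=> unz.
have [i ui] : exists i, u 0 i != 0.
  apply/existsP; move: unz; apply: contraR => /existsPn H.
  by apply/eqP/matrixP => a j; rewrite ord1 mxE; exact/eqP/negbNE/H.
have ui1 := F2nz ui.
pose e : 'cV['F_2]_K := delta_mx i 0.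
have fe : (u *m e) 0 0 = 1 by rewrite /e -colE mxE.
pose Z := [set v : 'cV['F_2]_K | (u *m v) 0 0 != 0].
have HZ : Z = (fun v => v + e) @: ~: Z.
  apply/setP => v; rewrite /Z inE; apply/idP/imsetP.
  - move=> fv; exists (v - e); last by rewrite subrK.
    by rewrite !inE negbK mulmxBr mxE [(- (u *m e)) 0 0]mxE fe (F2nz fv) subrr.
  - by case=> w; rewrite !inE negbK => /eqP fw ->; rewrite mulmxDr mxE fw fe add0r oner_eq0.
have cZ : #|Z| = #|~: Z| by rewrite {1}HZ card_imset //; exact: addIr.
have := cardsC Z; rewrite -cZ card_mx card_Fp // muln1.
have K0 : (0 < K)%N by apply: leq_ltn_trans (ltn_ord i).
have : (2 ^ K = 2 * 2 ^ K.-1)%N by rewrite -expnS prednK.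
rewrite /Z; lia.
Qed.

Lemma padP k h n (G0 : 'M['F_2]_(k, n)) j :
  col j (col_mx G0 (0 : 'M_(h, n))) = col_mx (col j G0) 0.
Proof. by rewrite col_col_mx; congr col_mx; apply/matrixP => a b; rewrite !mxE. Qed.

Lemma wtG1 k h n N (G0 : 'M['F_2]_(k, n)) (G1 : 'M['F_2]_(k + h, N))
  (hproj : projective G0) (hG1 : @simplex_complement _ _ h _ G0 G1)
  (u : 'rV['F_2]_(k + h)) : u != 0 ->
  (wt (u *m G1) + wt (lsubmx u *m G0))%N = (2 ^ (k + h).-1)%N.
Proof.
move=> unz.
pose P : 'M['F_2]_(k + h, n) := col_mx G0 0.
have injP : injective (fun j => col j P).
  by move=> j j' /=; rewrite /P !padP => /eq_col_mx [/(proj2 hproj)].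
case: hG1 => inj1 surj1.
pose f (v : 'cV['F_2]_(k+h)) := (u *m v) 0 0.
have e1 : wt (u *m G1) = #|[set j | f (col j G1) != 0]|.
  by rewrite /wt /supp; apply: eq_card => j; rewrite !inE /f [col j G1]colE mulmxA -colE [col j (u *m G1) 0 0]mxE.
have e2 : wt (lsubmx u *m G0) = #|[set j | f (col j P) != 0]|.
  rewrite /wt /supp; apply: eq_card => j; rewrite !inE /f [col j P]colE mulmxA -colE [col j (u *m P) 0 0]mxE.
  by rewrite /P -{2}[u](hsubmxK u) mul_row_col mulmx0 addr0.
have HZ : [set v | f v != 0] =
   (fun j => col j G1) @: [set j | f (col j G1) != 0] :|:
   (fun j => col j P) @: [set j | f (col j P) != 0].
  apply/setP => v; rewrite !inE; apply/idP/orP.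
  - move=> fv; case: (pickP (fun j => col j P == v)) => [j /eqP Pj | noP].
      by right; apply/imsetP; exists j; rewrite ?inE ?Pj.
    have vnz : v != 0 by apply: contraNneq fv => ->; rewrite /f mulmx0 mxE.
    have [j Gj] : exists j, col j G1 = v.
      by apply/surj1; split => // j; rewrite eq_sym noP.
    by left; apply/imsetP; exists j; rewrite ?inE ?Gj.
  - by case=> /imsetP [j]; rewrite inE => fj ->.
have HI : (fun j => col j G1) @: [set j | f (col j G1) != 0] :&:
   (fun j => col j P) @: [set j | f (col j P) != 0] = set0.
  apply/setP => v; rewrite !inE; apply/negbTE/negP => /andP[/imsetP [j _ ->] /imsetP [j' _ e]].
  have [_ /(_ j')] := (surj1 (col j G1)).1 (ex_intro _ j erefl).
  by rewrite e eqxx.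
by rewrite -(half_card unz) -/f HZ cardsU HI cards0 subn0 !card_imset // e1 e2.
Qed.

Lemma cardG1 k h n N (G0 : 'M['F_2]_(k, n)) (G1 : 'M['F_2]_(k + h, N))
  (hproj : projective G0) (hG1 : @simplex_complement _ _ h _ G0 G1) :
  (N + n)%N = (2 ^ (k + h)).-1.
Proof.
pose P : 'M['F_2]_(k + h, n) := col_mx G0 0.
have injP : injective (fun j => col j P).
  by move=> j j' /=; rewrite /P !padP => /eq_col_mx [/(proj2 hproj)].
case: hG1 => inj1 surj1.
have HZ : [set~ 0] =
   (fun j => col j G1) @: [set: 'I_N] :|: (fun j => col j P) @: [set: 'I_n].
  apply/setP => v; rewrite !inE; apply/idP/orP.
  - move=> vnz; case: (pickP (fun j => col j P == v)) => [j /eqP Pj | noP].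
      by right; apply/imsetP; exists j; rewrite ?inE ?Pj.
    have [j Gj] : exists j, col j G1 = v.
      by apply/surj1; split => // j; rewrite eq_sym noP.
    by left; apply/imsetP; exists j; rewrite ?inE ?Gj.
  - case=> /imsetP [j _ ->].
      by have [] := (surj1 (col j G1)).1 (ex_intro _ j erefl).
    by rewrite /P padP col_mx_eq0 eqxx andbT (proj1 hproj).
have HI : (fun j => col j G1) @: [set: 'I_N] :&: (fun j => col j P) @: [set: 'I_n] = set0.
  apply/setP => v; rewrite !inE; apply/negbTE/negP => /andP[/imsetP [j _ ->] /imsetP [j' _ e]].
  have [_ /(_ j')] := (surj1 (col j G1)).1 (ex_intro _ j erefl).
  by rewrite e eqxx.
have := cardsC1 (0 : 'cV['F_2]_(k + h)).
by rewrite HZ cardsU HI cards0 subn0 !card_imset // !cardsT !card_ord card_mx card_Fp // muln1.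
Qed.

Lemma wtE K N (i1 : 'I_K) (R : 'M['F_2]_(K, N)) (u : 'rV['F_2]_K) :
  wt (u *m ext_gen i1 R) = ((u 0 i1 != 0)%R * ext_len R + wt (u *m R))%N.
Proof.
rewrite /ext_gen mul_mx_row wt_rowmx; congr (_ + _)%N; rewrite -wt_const; congr wt.
apply/matrixP => a j; rewrite !mxE (ord1 a) (bigD1 i1) //= mxE eqxx /= mulr1.
by rewrite big1 ?addr0 // => k /negbTE ki; rewrite mxE ki mulr0.
Qed.

Lemma delta_nz K (i j : 'I_K) : (('e_i : 'rV['F_2]_K) 0 j != 0) = (j == i).
Proof. by rewrite mxE eqxx /=; case: (j == i); rewrite ?oner_eq0 ?eqxx. Qed.
Local Close Scope ring_scope.
Unset Implicit Arguments.

Theorem proposition4p3 (m h : nat) (hm : (2 <= m)%N) (hh : (1 <= h)%N)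
  (G0 : 'M['F_2]_(3 * m, 2 ^ (2 * m) - 1))
  (hG0rank : \rank G0 = (3 * m)%N)
  (hG0proj : projective G0)
  (hG0wts : forall w, is_nz_weight (code G0) w <->
      w \in [:: (2 ^ (2 * m - 1) - 2 ^ (m - 1))%N; 2 ^ (2 * m - 1);
                (2 ^ (2 * m - 1) + 2 ^ (m - 1))%N])
  (N1 : nat) (G1 : 'M['F_2]_(3 * m + h, N1))
  (hG1 : @simplex_complement _ _ h _ G0 G1)
  (R : 'M['F_2]_(3 * m + h, N1))
  (hRspan : code R = code G1) (hRrank : \rank R = (3 * m + h)%N)
  (i1 i2 : 'I_(3 * m + h)) (hi12 : i1 != i2)
  (hr1 : wt (row i1 R) = maxwt (code G1))
  (hr2 : wt (row i2 R) = minwt (code G1)) :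
  let n' := (2 ^ (3 * m + h - 1) - 2 ^ (2 * m) - 2 ^ m)%N in
  let C' := code (ext_gen i1 R) in
  (* parameters of C1 *)
  [/\ N1 = (2 ^ (3 * m + h) - 2 ^ (2 * m))%N, \rank G1 = (3 * m + h)%N,
      minwt (code G1) = (2 ^ (3 * m + h - 1) - 2 ^ (2 * m - 1) - 2 ^ (m - 1))%N
    & maxwt (code G1) = 2 ^ (3 * m + h - 1)] /\
  (* parameters and properties of C' *)
  [/\ (ext_len R + N1)%N = (2 ^ (3 * m + h) - 2 ^ (2 * m) + n')%N,
      \rank (ext_gen i1 R) = (3 * m + h)%N,
      minwt C' = (2 ^ (3 * m + h - 1) - 2 ^ (2 * m - 1) - 2 ^ (m - 1))%N,
      maxwt C' = (2 ^ (3 * m + h) - 2 ^ (2 * m) - 2 ^ m)%N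
    & minimal_code C' /\ ~ AB_condition C'].
Proof.
Local Open Scope ring_scope.
move=> n' C'.
pose A := (2 ^ (3 * m + h - 1))%N.
pose a := (2 ^ (2 * m - 1))%N.
pose b := (2 ^ (m - 1))%N.
have eA : (2 ^ (3 * m + h) = 2 * A)%N.
  by rewrite /A -expnS (_ : (3 * m + h - 1).+1 = 3 * m + h)%N //; lia.
have ea : (2 ^ (2 * m) = 2 * a)%N.
  by rewrite /a -expnS (_ : (2 * m - 1).+1 = 2 * m)%N //; lia.
have eb : (2 ^ m = 2 * b)%N.
  by rewrite /b -expnS (_ : (m - 1).+1 = m)%N //; lia.
have hb : (2 <= b)%N.
  by rewrite /b (_ : (m - 1 = (m - 2).+1)%N) ?expnS ?leq_pmulr ?expn_gt0 //; lia.
have hab : (4 * b <= a)%N.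
  rewrite /a (_ : (2 * m - 1 = (m - 1) + m)%N); last lia.
  by rewrite expnD -/b eb; nia.
have haA : (8 * a <= A)%N.
  rewrite /A (_ : (3 * m + h - 1 = (2 * m - 1) + (m + h))%N); last lia.
  rewrite expnD -/a.
  have : (2 ^ 3 <= 2 ^ (m + h))%N by rewrite leq_exp2l //; lia.
  rewrite (_ : (2 ^ 3 = 8)%N) //; nia.
have eA1 : (2 ^ (3 * m + h - 1))%N = A by [].
have ea1 : (2 ^ (2 * m - 1))%N = a by [].
have eb1 : (2 ^ (m - 1))%N = b by [].
clearbody A a b.
have nz_of_wt : forall n (c : 'rV['F_2]_n), (0 < wt c)%N -> c != 0.
  by move=> ? c; apply: contraTneq => ->; rewrite wt0.
have hbnd : forall x : 'rV['F_2]_(3 * m), (wt (x *m G0) <= a + b)%N.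
  move=> x; have [->|xnz] := eqVneq (x *m G0) 0; first by rewrite wt0.
  have : is_nz_weight (code G0) (wt (x *m G0)).
    by exists (x *m G0); [apply/imsetP; exists x|].
  move/hG0wts; rewrite !inE ea1 eb1 => /or3P [] /eqP ->; lia.
have hwt : forall u : 'rV['F_2]_(3 * m + h), u != 0 -> (wt (u *m G1) + wt (lsubmx u *m G0) = A)%N.
  by move=> u unz; rewrite (wtG1 hG0proj hG1 unz) -eA1 subn1.
have hC1 : forall c, c \in code G1 -> c != 0 -> (A - a - b <= wt c)%N && (wt c <= A)%N.
  move=> c /imsetP [u _ ->] cnz.
  have unz : u != 0 by apply: contraNneq cnz => ->; rewrite mul0mx.
  have := hwt u unz; have := hbnd (lsubmx u).
  move: (wt (lsubmx u *m G0)) (wt (u *m G1)) => w1 w2 H1 H2.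
  by apply/andP; split; lia.
have min1 : minwt (code G1) = (A - a - b)%N.
  apply: minwt_eq; last by move=> c cC cnz; case/andP: (hC1 c cC cnz).
  have [c0 c0C [c0nz c0w]] : is_nz_weight (code G0) (a + b).
    by apply/hG0wts; rewrite !inE -ea1 -eb1 eqxx !orbT.
  case/imsetP: c0C => x _ c0x.
  pose u : 'rV['F_2]_(3 * m + h) := row_mx x 0.
  have lu : lsubmx u = x by rewrite row_mxKl.
  have unz : u != 0.
    apply: contraNneq c0nz => u0; rewrite c0x -lu u0.
    by apply/eqP/matrixP => i j; rewrite !mxE big1 // => k _; rewrite !mxE mul0r.
  have w : wt (u *m G1) = (A - a - b)%N.
    by have := hwt u unz; rewrite lu -c0x c0w; lia.
  exists (u *m G1); first by apply/imsetP; exists u.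
  by split; [apply: nz_of_wt; rewrite w; clear -hab hb haA; lia | exact: w].
have max1 : maxwt (code G1) = A.
  apply: maxwt_eq; last by move=> c cC cnz; case/andP: (hC1 c cC cnz).
  pose y : 'rV['F_2]_h := const_mx 1.
  pose u : 'rV['F_2]_(3 * m + h) := row_mx 0 y.
  have lu : lsubmx u = 0 by rewrite row_mxKl.
  have unz : u != 0.
    apply/eqP => /(congr1 (fun M => rsubmx M 0 (Ordinal hh))).
    by rewrite row_mxKr !mxE; apply/eqP; rewrite oner_eq0.
  have w : wt (u *m G1) = A.
    by have := hwt u unz; rewrite lu mul0mx wt0 addn0.
  exists (u *m G1); first by apply/imsetP; exists u.
  by split; [apply: nz_of_wt; rewrite w; clear -hab hb haA; lia | exact: w].
have rankG1 : \rank G1 = (3 * m + h)%N.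
  apply/eqP/inj_row_free => v vG; apply/eqP; apply: contraT => vnz.
  have := hwt v vnz; rewrite vG wt0; have := hbnd (lsubmx v).
  by move: (wt (lsubmx v *m G0)) => w1 H1 H2; lia.
have rfR : row_free R by rewrite /row_free hRrank.
have hRi : forall u : 'rV['F_2]_(3 * m + h), u *m R = 0 -> u = 0.
  move=> u uR; apply: (@row_free_inj _ 1 _ _ R rfR u 0).
  by rewrite /= uR mul0mx.
have hCR : forall u : 'rV['F_2]_(3 * m + h), u != 0 -> (A - a - b <= wt (u *m R))%N && (wt (u *m R) <= A)%N.
  move=> u unz; apply: hC1; first by rewrite -hRspan; apply/imsetP; exists u.
  by apply: contra unz => /eqP/hRi ->.
have elen : ext_len R = (A - 2 * a - 2 * b)%N.
  by rewrite /ext_len hRspan min1 max1; lia.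
have hE : forall u : 'rV['F_2]_(3 * m + h), wt (u *m ext_gen i1 R) =
    ((u 0 i1 != 0)%R * (A - 2 * a - 2 * b) + wt (u *m R))%N.
  by move=> u; rewrite wtE elen.
have minC' : minwt C' = (A - a - b)%N.
  apply: minwt_eq.
  - exists ('e_i2 *m ext_gen i1 R); first by apply/imsetP; exists 'e_i2.
    have w : wt ('e_i2 *m ext_gen i1 R) = (A - a - b)%N.
      by rewrite hE delta_nz (negbTE hi12) mul0n add0n -rowE hr2 min1.
    by split; [apply: nz_of_wt; rewrite w; clear -hab hb haA; lia | exact: w].
  - move=> c /imsetP [u _ ->] cnz.
    have unz : u != 0 by apply: contraNneq cnz => ->; rewrite mul0mx.
    rewrite hE; case/andP: (hCR u unz) => H1 H2.
    move: (u 0 i1 != 0)%R (wt (u *m R)) H1 H2 => [] w H1 H2; rewrite ?mul1n ?mul0n; clear -H1 H2 hab hb haA; lia.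
have maxC' : maxwt C' = (2 * A - 2 * a - 2 * b)%N.
  apply: maxwt_eq.
  - exists ('e_i1 *m ext_gen i1 R); first by apply/imsetP; exists 'e_i1.
    have w : wt ('e_i1 *m ext_gen i1 R) = (2 * A - 2 * a - 2 * b)%N.
      by rewrite hE delta_nz eqxx -rowE hr1 max1 mul1n; clear -hab hb haA; lia.
    by split; [apply: nz_of_wt; rewrite w; clear -hab hb haA; lia | exact: w].
  - move=> c /imsetP [u _ ->] cnz.
    have unz : u != 0 by apply: contraNneq cnz => ->; rewrite mul0mx.
    rewrite hE; case/andP: (hCR u unz) => H1 H2.
    move: (u 0 i1 != 0)%R (wt (u *m R)) H1 H2 => [] w H1 H2; rewrite ?mul1n ?mul0n; clear -H1 H2 hab hb haA; lia.
have N1eq : N1 = (2 * A - 2 * a)%N.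
  by have := cardG1 hG0proj hG1; rewrite eA ea; clear -hab hb haA; lia.
split.
  split; [by rewrite N1eq eA ea | exact: rankG1 | by rewrite min1 eA1 ea1 eb1 | by rewrite max1 eA1].
split.
- by rewrite elen N1eq /n' eA ea eb eA1; clear -hab hb haA; lia.
- apply/eqP/inj_row_free => v vE.
  have := hE v; rewrite vE wt0 => /esym/eqP; rewrite addn_eq0.
  by case/andP => _ /eqP/wt_eq0/hRi.
- by rewrite minC' eA1 ea1 eb1.
- by rewrite maxC' eA ea eb; clear -hab hb haA; lia.
split.
- move=> c c' /imsetP [u _ ->] /imsetP [u' _ ->] cnz c'nz sub.
  apply/eqP; apply: contraT => neq.
  have key := wt_split sub; rewrite -mulmxBl in key.
  have dnz : u' - u != 0.
    by apply: contra neq => /eqP d0; rewrite (subr0_eq d0) eqxx.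
  have unz : u != 0 by apply: contraNneq cnz => ->; rewrite mul0mx.
  have u'nz : u' != 0 by apply: contraNneq c'nz => ->; rewrite mul0mx.
  have bits : u 0 i1 == 0 -> (u' - u) 0 i1 == 0 -> u' 0 i1 == 0.
    by move=> /eqP h1; rewrite !mxE h1 subr0.
  case/andP: (hCR u unz) => H1 H2.
  case/andP: (hCR u' u'nz) => H3 H4.
  case/andP: (hCR _ dnz) => H5 H6.
  rewrite !hE in key.
  move: key bits H1 H2 H3 H4 H5 H6.
  move: (wt (u *m R)) (wt (u' *m R)) (wt ((u' - u) *m R)) => w1 w2 w3.
  case: (F2c (u 0 i1)) => ->; case: (F2c (u' 0 i1)) => ->;
    case: (F2c ((u' - u) 0 i1)) => ->;
    rewrite ?eqxx ?oner_eq0 /= ?mul0n ?mul1n ?add0n => key bt H1 H2 H3 H4 H5 H6;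
    try by move: (bt isT isT).
  all: try by clear -key H1 H2 H3 H4 H5 H6 hab hb haA; lia.
- move: minC' maxC'; rewrite /AB_condition => -> ->.
  have -> : (2 * A - 2 * a - 2 * b = 2 * (A - a - b))%N by clear -hab hb haA; lia.
  rewrite natrM.
  have L0 : ((A - a - b)%:R : rat) != 0 by rewrite pnatr_eq0; clear -hab hb haA; lia.
  have -> : (((A - a - b)%:R / (2%:R * (A - a - b)%:R)) : rat) = 1 / 2.
    by field.
  by rewrite Order.POrderTheory.ltxx.
Qed.
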